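(* Let $A_1,\ldots,A_n$ be events in a probability space, let $X$ be the number of these events that occur, and for $1\le j\le n$ let $S_j=\sum_{1\le i_1<\cdots<i_j\le n}P(A_{i_1}\cdots A_{i_j})$. Let $k$ be an integer with $1\le k<n$. For distinct indices $i_1,\ldots,i_k\in\{1,\ldots,n\}$ and $1\le s\le n-k$, let $W_s(i_1,\ldots,i_k)$ be the $s$-th largest of the $n-k$ values $P(A_{i_1}\cdots A_{i_k}A_j)$, $j\in\{1,\ldots,n\}\setminus\{i_1,\ldots,i_k\}$ (counted with multiplicity). Let $$V=\sum_{1\le r_1<\cdots<r_k\le n}\ \sum_{s=1}^{n-k}W_s(r_1,\ldots,r_k)\frac{k}{(k+s)(k+s-1)}.$$ If $k$ is even then $P(X\ge 1)\ge\sum_{j=1}^{k}(-1)^{j+1}S_j+V$, and if $k$ is odd then $P(X\ge 1)\le\sum_{j=1}^{k}(-1)^{j+1}S_j-V$.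
   Context: $A_{i_1}\cdots A_{i_j}$ denotes the intersection of the events. *)

(* Defs.v *)
From HB Require Import structures.
From mathcomp Require Import all_boot all_order all_algebra.
From mathcomp Require Import all_classical all_reals all_analysis.
Set Implicit Arguments. Unset Strict Implicit. Unset Printing Implicit Defensive.
Import Order.TTheory GRing.Theory Num.Theory.
Local Open Scope classical_set_scope.
Local Open Scope ring_scope.

Section Defs.
Context {d : measure_display} {T : measurableType d} {R : realType}.

(* real-valued probability of an event (P is finite, so fine is exact) *)
Definition Pr (P : probability T R) (B : set T) : R := fine (P B).

Definition inter_ev (n : nat) (A : 'I_n -> set T) (I : {set 'I_n}) : set T :=
  \bigcap_(i in [set i | i \in I]) A i.

Definition numOcc (n : nat) (A : 'I_n -> set T) (x : T) : nat :=
  #|[set i : 'I_n | `[< A i x >]]|.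

Definition Sj (P : probability T R) (n : nat) (A : 'I_n -> set T) (j : nat) : R :=
  \sum_(I : {set 'I_n} | #|I| == j) Pr P (inter_ev A I).

Definition Wlist (P : probability T R) (n : nat) (A : 'I_n -> set T)
    (I : {set 'I_n}) : seq R :=
  sort >=%R [seq Pr P (inter_ev A I `&` A j) | j <- enum (~: I)].

(* W_s(I) = s-th largest value (s is 1-indexed) *)
Definition W (P : probability T R) (n : nat) (A : 'I_n -> set T)
    (I : {set 'I_n}) (s : nat) : R :=
  nth 0 (Wlist P A I) s.-1.

Definition V (P : probability T R) (n : nat) (A : 'I_n -> set T) (k : nat) : R :=
  \sum_(I : {set 'I_n} | #|I| == k)
    \sum_(1 <= s < (n - k).+1)
      W P A I s * (k%:R / ((k + s)%:R * (k + s - 1)%:R)).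

End Defs.

(* Main.v *)
Require Import Defs.
From HB Require Import structures.
From mathcomp Require Import all_boot all_order all_algebra.
From mathcomp Require Import all_classical all_reals all_analysis.
From mathcomp Require Import ring lra.
Import Order.TTheory GRing.Theory Num.Theory.
Local Open Scope classical_set_scope.
Local Open Scope ring_scope.

Section Alg.
Context (R : realType).

Lemma comb_le (c : nat -> R) (hc : forall i j, (i <= j)%N -> c j <= c i)
  (c0 : forall i, 0 <= c i) L (b : nat -> bool) :
  \sum_(0 <= i < L | b i) c i <= \sum_(0 <= i < \sum_(0 <= i < L) b i) c i.
Proof.
elim: L => [|L IH]; first by rewrite !big_geq.
have hm : (\sum_(0 <= i < L) b i <= L)%N.
  elim: L {IH} => [|L' IH']; first by rewrite big_geq.
  by rewrite big_nat_recr //= -addn1 leq_add // leq_b1.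
rewrite big_mkcond /= big_nat_recr //= -big_mkcond /= big_nat_recr //=.
case: (b L) => /=.
  rewrite addn1 big_nat_recr //=; apply: lerD => //; exact: hc.
by rewrite addr0 addn0.
Qed.

Definition ck (k s : nat) : R := k%:R / ((k + s)%:R * (k + s - 1)%:R).

Lemma ck_tele k t : (1 <= k)%N ->
  \sum_(1 <= s < t.+1) ck k s = t%:R / (k + t)%:R.
Proof.
move=> hk; elim: t => [|t IH]; first by rewrite big_geq // mul0r.
rewrite big_nat_recr //= IH /ck.
have -> : (k + t.+1 - 1)%N = (k + t)%N by rewrite addnS subn1.
have h1 : (k + t)%:R != 0 :> R by rewrite pnatr_eq0 -lt0n addn_gt0 hk.
have h2 : (k + t.+1)%:R != 0 :> R by rewrite pnatr_eq0 addnS.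
move: h1 h2; rewrite addnS -addn1 !natrD => h1 h2.
field. by rewrite h1 h2.
Qed.

Lemma alt_bin k m : (1 <= k)%N ->
  \sum_(1 <= j < k.+1) (-1) ^+ j.+1 * 'C(m, j)%:R
    = (0 < m)%:R - (-1) ^+ k * 'C(m.-1, k)%:R :> R.
Proof.
case: m => [|m] hk.
  rewrite big_nat_cond big1 /=; last first.
    by move=> j /andP [/andP [hj _] _]; rewrite bin0n eqn0Ngt hj mulr0.
  by rewrite bin0n eqn0Ngt hk mulr0 subr0.
rewrite /= {hk}; elim: k => [|k IH]; first by rewrite big_geq // bin0 expr0 mul1r subrr.
rewrite big_nat_recr //= IH binS natrD !exprS; ring.
Qed.

Lemma F_bin k m : (1 <= k)%N ->
  (\sum_(1 <= s < (m - k).+1) ck k s) * 'C(m, k)%:R = 'C(m.-1, k)%:R :> R.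
Proof.
move=> hk; have [lt|le] := ltnP m k.
  rewrite !bin_small ?mulr0 //; apply: leq_ltn_trans lt; exact: leq_pred.
rewrite ck_tele // subnKC //.
have m0 : (0 < m)%N by apply: leq_trans le.
have hm : m%:R != 0 :> R by rewrite pnatr_eq0 -lt0n.
have E := mul_bin_down m k.
have E' : m%:R * 'C(m.-1, k)%:R = (m - k)%:R * 'C(m, k)%:R :> R by rewrite -!natrM E.
apply: (mulfI hm); rewrite E'; field; exact: hm.
Qed.

Lemma S_expand n (p : {set 'I_n} -> R) j :
  \sum_(I : {set 'I_n} | #|I| == j) \sum_(J : {set 'I_n} | I \subset J) p J
    = \sum_J p J * 'C(#|J|, j)%:R.
Proof.
rewrite (exchange_big_dep xpredT) //=; apply: eq_bigr => J _.
rewrite (eq_bigl (mem [set I : {set 'I_n} | I \subset J & #|I| == j])); last first.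
  by move=> I; rewrite !inE andbC.
by rewrite sumr_const cards_draws mulr_natr.
Qed.

Lemma count_perm n (I J : {set 'I_n}) (e : seq 'I_n) :
  perm_eq e (enum (~: I)) -> I \subset J ->
  count (mem J) e = (#|J| - #|I|)%N.
Proof.
move=> pe IJ.
have ue : uniq e by rewrite (perm_uniq pe) enum_uniq.
rewrite -size_filter -(card_uniqP (filter_uniq _ ue)).
have E : J :&: I = I := elimT finset.setIidPr IJ.
rewrite -[in (_ - #|I|)%N]E -cardsD; apply: eq_card => x.
by rewrite mem_filter (perm_mem pe) mem_enum !inE andbC.
Qed.

Lemma ckS k i : (1 <= k)%N -> ck k i.+1 = k%:R / ((k + i.+1)%:R * (k + i)%:R).
Proof. by move=> hk; rewrite /ck addnS subn1. Qed.

Lemma ck_ge0 k i : (1 <= k)%N -> 0 <= ck k i.+1.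
Proof. by move=> hk; rewrite ckS // divr_ge0 // mulr_ge0. Qed.

Lemma ck_mono k i j : (1 <= k)%N -> (i <= j)%N -> ck k j.+1 <= ck k i.+1.
Proof.
move=> hk hij; rewrite !ckS //; apply: ler_wpM2l => //.
have pos : forall a, (0 < (k + a.+1)%:R * (k + a)%:R :> R).
  by move=> a; rewrite -natrM ltr0n muln_gt0 addnS /= addn_gt0 hk.
rewrite lef_pV2 ?posrE // -!natrM ler_nat.
by apply: leq_mul; rewrite ?ltnS leq_add2l.
Qed.

Lemma perI n (p : {set 'I_n} -> R) (p0 : forall J, 0 <= p J) k (hk : (1 <= k)%N)
  (I : {set 'I_n}) (hI : #|I| = k) (x0 : 'I_n) (e : seq 'I_n)
  (pe : perm_eq e (enum (~: I))) :
  \sum_(1 <= s < (n - k).+1)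
     nth 0 [seq \sum_(J : {set 'I_n} | (I \subset J) && (j \in J)) p J | j <- e] s.-1 * ck k s
  <= \sum_(J : {set 'I_n} | I \subset J) p J * \sum_(1 <= s < (#|J| - k).+1) ck k s.
Proof.
have se : size e = (n - k)%N.
  rewrite (perm_size pe) -cardE; have := cardsC I; rewrite card_ord hI => h.
  by rewrite -[X in (X - _)%N]h addKn.
rewrite big_add1 /=.
under eq_big_nat => i /andP[_ hi] do rewrite (nth_map x0) ?se //.
under eq_bigr => i _ do rewrite big_mkcondr mulr_suml.
rewrite exchange_big /=; apply: ler_sum => J IJ.
rewrite (_ : \sum_(0 <= i < n - k) _ = p J * \sum_(0 <= i < n - k) (if nth x0 e i \in J then ck k i.+1 else 0)); last first.
  by rewrite mulr_sumr; apply: eq_bigr => i _; case: (_ \in J); rewrite ?mul0r ?mulr0.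
apply: ler_wpM2l => //.
rewrite -big_mkcond big_add1 /=.
apply: le_trans (@comb_le (fun i => ck k i.+1) _ _ _ _) _.
- by move=> i j; apply: ck_mono.
- by move=> i; apply: ck_ge0.
have -> : (\sum_(0 <= i < n - k) (nth x0 e i \in J) = #|J| - k)%N.
  rewrite -se -(big_nth x0 xpredT (fun j => (j \in J : nat))) -hI -(@count_perm _ I J e pe IJ).
  by elim: (e) => [|a s IH]; rewrite ?big_nil ?big_cons //= IH.
by [].
Qed.

End Alg.

Set Implicit Arguments. Unset Strict Implicit.
Section Atoms.
Context (d : measure_display) (T : measurableType d) (R : realType)
  (P : probability T R) (n : nat) (A : 'I_n -> set T)
  (mA : forall i, measurable (A i)).

Definition occ (x : T) : {set 'I_n} := [set i | `[< A i x >]].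
Definition atom (J : {set 'I_n}) : set T := [set x | occ x = J].
Lemma numOccE x : numOcc A x = #|occ x|.
Proof.
apply: eq_card => i; rewrite /occ [in RHS]inE.
apply/idP/idP => h.
- move: h; rewrite in_setE /=; by [].
- rewrite in_setE /=; by [].
Qed.

Lemma atomE J x : atom J x = (occ x = J). Proof. by []. Qed.

Lemma atom_meas J : measurable (atom J).
Proof.
have -> : atom J = \bigcap_(i in [set: 'I_n]) (if i \in J then A i else ~` A i).
  apply/seteqP; split=> x /=.
  - move=> <- i _; rewrite /occ inE; case: asboolP => //.
  - move=> H; apply/setP => i; rewrite /occ inE.
    have := H i I; case: (i \in J); case: asboolP => //.
apply: fin_bigcap_measurable; first exact: finite_finset.
by move=> i _; case: (i \in J) => //; apply: measurableC.
Qed.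

Lemma Pr_ge0 B : 0 <= Pr P B.
Proof. by apply: fine_ge0; apply: measure_ge0. Qed.

Lemma PrU B C : measurable B -> measurable C -> B `&` C = set0 ->
  Pr P (B `|` C) = Pr P B + Pr P C.
Proof.
move=> mB mC BC; rewrite /Pr measureU // fineD //; exact: fin_num_measure.
Qed.

Lemma Pr_atoms_seq (s : seq {set 'I_n}) :
  measurable [set x | occ x \in s] /\
  (uniq s -> Pr P [set x | occ x \in s] = \sum_(J <- s) Pr P (atom J)).
Proof.
elim: s => [|J s [IHm IHe]].
  have -> : [set x | occ x \in [::]] = set0 by apply/seteqP; split=> x //=.
  by split=> // _; rewrite big_nil /Pr measure0.
have E : [set x | occ x \in J :: s] = atom J `|` [set x | occ x \in s].
  apply/seteqP; split=> x /=; rewrite inE.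
  - by case/orP => [/eqP ox|H]; [left|right].
  - by rewrite atomE; case=> [->|->]; rewrite ?eqxx ?orbT.
rewrite E; split; first by apply: measurableU => //; exact: atom_meas.
move=> /andP [Js us]; rewrite PrU //; last 2 first.
- exact: atom_meas.
- apply/seteqP; split=> x //= [ox xs]; move: Js; rewrite -ox /=.
  by rewrite xs.
by rewrite IHe // big_cons.
Qed.

Lemma Pr_atoms (Q : pred {set 'I_n}) :
  Pr P [set x | Q (occ x)] = \sum_(J | Q J) Pr P (atom J).
Proof.
have -> : [set x | Q (occ x)] = [set x | occ x \in enum Q].
  by apply/seteqP; split=> x /=; rewrite mem_enum.
by rewrite (proj2 (Pr_atoms_seq _)) ?enum_uniq // big_enum.
Qed.

Lemma inter_evE I : inter_ev A I = [set x | I \subset occ x].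
Proof.
apply/seteqP; split=> x /=.
- move=> H; apply/fintype.subsetP => i iI; rewrite /occ inE; apply/asboolP; exact: H.
- by move=> /fintype.subsetP H i /= iI; have := H i iI; rewrite /occ inE => /asboolP.
Qed.

Lemma Pr_inter I : Pr P (inter_ev A I) = \sum_(J : {set 'I_n} | I \subset J) Pr P (atom J).
Proof. by rewrite inter_evE (Pr_atoms (fun J => I \subset J)). Qed.

Lemma Pr_inter2 I j : Pr P (inter_ev A I `&` A j) =
  \sum_(J : {set 'I_n} | (I \subset J) && (j \in J)) Pr P (atom J).
Proof.
rewrite -(Pr_atoms (fun J => (I \subset J) && (j \in J))) inter_evE.
congr (Pr P _); apply/seteqP; split=> x /=.
- by move=> [-> Ajx] /=; rewrite /occ inE; apply/asboolP.
- by move=> /andP [-> ]; rewrite /occ inE => /asboolP.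
Qed.

End Atoms.
Unset Implicit Arguments.

Theorem theorem5 (d : measure_display) (T : measurableType d) (R : realType)
    (P : probability T R) (n : nat) (A : 'I_n -> set T)
    (mA : forall i, measurable (A i)) (k : nat)
    (hk1 : (1 <= k)%N) (hkn : (k < n)%N) :
  (~~ odd k ->
     \sum_(1 <= j < k.+1) (-1) ^+ j.+1 * Sj P A j + V P A k
       <= Pr P [set x | (1 <= numOcc A x)%N]) /\
  (odd k ->
     Pr P [set x | (1 <= numOcc A x)%N]
       <= \sum_(1 <= j < k.+1) (-1) ^+ j.+1 * Sj P A j - V P A k).
Proof.
pose p J := Pr P (atom A J).
have p0 : forall J, 0 <= p J by move=> J; apply: Pr_ge0.
have hX : Pr P [set x | (1 <= numOcc A x)%N] = \sum_J p J * (0 < #|J|)%:R.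
  transitivity (Pr P [set x | (fun J : {set 'I_n} => 0 < #|J|)%N (occ A x)]).
    by congr (Pr P _); apply/seteqP; split=> x /=; rewrite numOccE.
  rewrite (Pr_atoms P mA (fun J => 0 < #|J|)%N) big_mkcond; apply: eq_bigr => J _.
  by case: (0 < #|J|)%N; rewrite ?mulr1 ?mulr0.
have hS : forall j, Sj P A j = \sum_J p J * 'C(#|J|, j)%:R.
  move=> j; rewrite /Sj -S_expand; apply: eq_bigr => I _; exact: Pr_inter.
pose D := \sum_J p J * 'C(#|J|.-1, k)%:R.
have hsum : \sum_(1 <= j < k.+1) (-1) ^+ j.+1 * Sj P A j
    = \sum_J p J * (0 < #|J|)%:R - (-1) ^+ k * D.
  under eq_big_nat => j _ do rewrite hS mulr_sumr.
  rewrite exchange_big /= /D mulr_sumr -sumrB; apply: eq_bigr => J _.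
  rewrite (_ : _ - _ = p J * ((0 < #|J|)%:R - (-1) ^+ k * 'C(#|J|.-1, k)%:R)); last by ring.
  rewrite -alt_bin // mulr_sumr; apply: eq_bigr => j _; ring.
have hV : V P A k <= D.
  pose Y := \sum_(I : {set 'I_n} | #|I| == k)
      \sum_(J : {set 'I_n} | I \subset J) p J * \sum_(1 <= s < (#|J| - k).+1) @ck R k s.
  have <- : Y = D.
    rewrite /Y (exchange_big_dep xpredT) //= /D.
    apply: eq_bigr => J _.
    rewrite (eq_bigl (mem [set I : {set 'I_n} | I \subset J & #|I| == k])); last first.
      by move=> I; rewrite !inE andbC.
    by rewrite sumr_const cards_draws -mulrnAr -mulr_natr F_bin.
  rewrite /V /Y; apply: ler_sum => I /eqP hI; rewrite /W /Wlist sort_map.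
    set e := sort _ _.
    have -> : [seq Pr P (inter_ev A I `&` A j) | j <- e] =
        [seq \sum_(J : {set 'I_n} | (I \subset J) && (j \in J)) p J | j <- e].
      by apply: eq_map => j; exact: Pr_inter2.
    have := (@perI R n p p0 k hk1 I hI (Ordinal hkn) e (permEl (perm_sort _ _))).
    by [].
have hsg : (-1) ^+ k = (-1) ^+ (odd k) :> R by rewrite -signr_odd.
split => ho; rewrite hsum hX hsg.
- move: ho; case: (odd k) => //= _; rewrite expr0 mul1r; lra.
- move: ho; case: (odd k) => //= _; rewrite expr1; lra.
Qed.
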